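(* Let $(M,d)$ be a pointed metric space and let $\mu\in ba(\widetilde{M})$ with Jordan decomposition $\mu=\mu^+-\mu^-$. The following are equivalent: (i) $\|\Phi^*\mu\|=\|\mu\|$. (ii) For every $\gamma\in(0,1)$ there exist a subset $A\subseteq\widetilde M$ and $f\in B_{\mathrm{Lip}_0(M)}$ such that $\mu^+(A)+\mu^-(\mathfrak{r}(A))\geq \gamma|\mu|(\widetilde M)$ and $f(m_{x,y})\geq\gamma$ for all $(x,y)\in A$. (iii) For every $\gamma\in(0,1)$ there exists a $\gamma$-cyclically monotonic subset $A\subseteq\widetilde M$ with $\mu^+(A)+\mu^-(\mathfrak{r}(A))\geq\gamma|\mu|(\widetilde M)$.
   Context: $(M,d)$ is a metric space with base point $0$; $\mathrm{Lip}_0(M)$ is the real Banach space of Lipschitz $f\colon M\to\mathbb R$ with $f(0)=0$, normed by the best Lipschitz constant, with closed unit ball $B_{\mathrm{Lip}_0(M)}$. $\widetilde M=\{(x,y)\in M\times M: x\neq y\}$, and $f(m_{x,y})=(f(x)-f(y))/d(x,y)$ for $(x,y)\in\widetilde M$. $\mathfrak r\colon\widetilde M\to\widetilde M$ is $\mathfrak r(x,y)=(y,x)$. $ba(\widetilde M)$ is the Banach space of bounded finitely additive signed measures on the power set of $\widetilde M$ with norm $\|\mu\|=|\mu|(\widetilde M)$ (this is the dual of $\ell_\infty(\widetilde M)$). The de Leeuw map $\Phi\colon\mathrm{Lip}_0(M)\to\ell_\infty(\widetilde M)$ is $\Phi f(x,y)=(f(x)-f(y))/d(x,y)$, a linear isometry;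 its adjoint gives $\Phi^*\mu\in\mathrm{Lip}_0(M)^*$, $(\Phi^*\mu)(f)=\int_{\widetilde M}\Phi f\,d\mu$. For $\gamma\in(0,1]$, $A\subseteq\widetilde M$ is $\gamma$-cyclically monotonic if for every finite sequence $(x_1,y_1),\dots,(x_n,y_n)\in A$, with $y_{n+1}=y_1$, $\sum_{i=1}^n\min\{d(x_i,y_{i+1})-\gamma d(x_i,y_i),\,d(y_i,y_{i+1})\}\ge 0$. *)

(* Defs.v *)
From HB Require Import structures.
From mathcomp Require Import all_boot all_order all_algebra.
From mathcomp Require Import classical_sets boolp reals.
Set Implicit Arguments. Unset Strict Implicit. Unset Printing Implicit Defensive.
Import Order.TTheory GRing.Theory Num.Theory.
Local Open Scope ring_scope.
Local Open Scope classical_set_scope.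

Section Defs.
Variable R : realType.

Definition is_metric (M : Type) (d : M -> M -> R) : Prop :=
  (forall x y, 0 <= d x y) /\ (forall x y, d x y = 0 <-> x = y) /\
  (forall x y, d x y = d y x) /\ (forall x y z, d x z <= d x y + d y z).

Definition Mt (M : Type) := {p : M * M | p.1 <> p.2}.

Definition rflip (M : Type) (p : Mt M) : Mt M :=
  exist (fun q : M * M => q.1 <> q.2) ((sval p).2, (sval p).1)
        (fun h => proj2_sig p (esym h)).

(** f(m_{x,y}) = (f x - f y)/d(x,y), i.e. the de Leeuw transform Phi f *)
Definition Phi (M : Type) (d : M -> M -> R) (f : M -> R) (p : Mt M) : R :=
  (f (sval p).1 - f (sval p).2) / d (sval p).1 (sval p).2.

Definition in_BLip0 (M : Type) (d : M -> M -> R) (x0 : M) (f : M -> R) : Prop :=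
  f x0 = 0 /\ forall x y, `|f x - f y| <= d x y.

(** ba(T): bounded finitely additive signed measures on the power set of T *)
Definition is_ba (T : Type) (mu : set T -> R) : Prop :=
  (exists C : R, forall A, `|mu A| <= C) /\
  (forall A B : set T, A `&` B = set0 -> mu (A `|` B) = mu A + mu B).

Definition mu_pos (T : Type) (mu : set T -> R) (A : set T) : R :=
  sup [set mu B | B in [set B | B `<=` A]].
Definition mu_neg (T : Type) (mu : set T -> R) (A : set T) : R :=
  sup [set - mu B | B in [set B | B `<=` A]].
Definition tvar (T : Type) (mu : set T -> R) (A : set T) : R :=
  mu_pos mu A + mu_neg mu A.
Definition ba_norm (T : Type) (mu : set T -> R) : R := tvar mu setT.

Definition is_partition (T : Type) (P : seq (set T)) : Prop :=
  (forall i j, (i < size P)%N -> (j < size P)%N -> i <> j ->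
     nth set0 P i `&` nth set0 P j = set0) /\
  (forall t, exists i, (i < size P)%N /\ nth set0 P i t).

Definition lower_sum (T : Type) (nu : set T -> R) (g : T -> R) (P : seq (set T)) : R :=
  \sum_(A <- P) inf (g @` A) * nu A.
Definition int_pos (T : Type) (nu : set T -> R) (g : T -> R) : R :=
  sup [set lower_sum nu g P | P in [set P | is_partition P]].
Definition ba_int (T : Type) (mu : set T -> R) (g : T -> R) : R :=
  int_pos (mu_pos mu) g - int_pos (mu_neg mu) g.

Definition Phistar_norm (M : Type) (d : M -> M -> R) (x0 : M) (mu : set (Mt M) -> R) : R :=
  sup [set `|ba_int mu (Phi d f)| | f in [set f | in_BLip0 d x0 f]].

Definition cyc_mon (M : Type) (d : M -> M -> R) (gamma : R) (A : set (Mt M)) : Prop :=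
  forall (n : nat) (p : 'I_n.+1 -> Mt M), (forall i, A (p i)) ->
    0 <= \sum_(i < n.+1)
      Num.min (d (sval (p i)).1 (sval (p (ordS i))).2 - gamma * d (sval (p i)).1 (sval (p i)).2)
              (d (sval (p i)).2 (sval (p (ordS i))).2).

End Defs.

(* Main.v *)
Require Import Defs.
From HB Require Import structures.
From mathcomp Require Import all_boot all_order all_algebra.
From mathcomp Require Import classical_sets boolp reals.
From mathcomp Require Import ring lra.
Import Order.TTheory GRing.Theory Num.Theory.
Local Open Scope ring_scope.
Local Open Scope classical_set_scope.

Section BA.
Variables (R : realType) (T : Type) (m : set T -> R) (hm : is_ba m).

Lemma m0 : m set0 = 0.
Proof.
case: hm => _ hadd.
have := hadd set0 set0 (setI0 _); rewrite setU0 => h.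
lra.
Qed.

Lemma m_ub : exists C : R, forall B, m B <= C.
Proof.
case: hm => [[C hC] _]; exists C => B.
exact: le_trans (ler_norm _) (hC B).
Qed.

Local Notation nu := (mu_pos m).

Lemma nu_hub A : has_ubound [set m B | B in [set B | B `<=` A]].
Proof. case: m_ub => C hC; exists C => _ [B _ <-]; exact: hC. Qed.

Lemma nu_ub A B : B `<=` A -> m B <= nu A.
Proof. move=> hB; apply: ub_le_sup; first exact: nu_hub. by exists B. Qed.

Lemma nu_le A x : (forall B, B `<=` A -> m B <= x) -> nu A <= x.
Proof.
move=> h; apply: ge_sup; first by exists (m set0), set0 => //; exact: sub0set.
by move=> _ [B hB <-]; exact: h.
Qed.

Lemma nu_ge0 A : 0 <= nu A.
Proof. rewrite -m0; apply: nu_ub; exact: sub0set. Qed.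

Lemma nu0 : nu set0 = 0.
Proof.
apply/le_anti; rewrite nu_ge0 andbT; apply: nu_le => B.
by rewrite subset0 => ->; rewrite m0.
Qed.

Lemma nu_add A B : A `&` B = set0 -> nu (A `|` B) = nu A + nu B.
Proof.
case: hm => _ hadd hAB; apply/le_anti/andP; split.
  apply: nu_le => D hD.
  have -> : D = (D `&` A) `|` (D `&` B).
    by rewrite -setIUr; apply/esym/setIidPl.
  rewrite hadd; last first.
    rewrite -subset0 => t [[_ ?] [_ ?]].
    by have : (A `&` B) t by []; rewrite hAB.
  apply: lerD; apply: nu_ub; exact: subIsetr.
have h1 : forall B1 B2, B1 `<=` A -> B2 `<=` B -> m B1 + m B2 <= nu (A `|` B).
  move=> B1 B2 h1 h2; rewrite -hadd; last first.
    rewrite -subset0 => t [/h1 ? /h2 ?].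
    by have : (A `&` B) t by []; rewrite hAB.
  apply: nu_ub => t [/h1|/h2] ?; by [left|right].
have h2 : forall B2, B2 `<=` B -> nu A <= nu (A `|` B) - m B2.
  move=> B2 hB2; apply: nu_le => B1 hB1; rewrite lerBrDr; exact: h1.
rewrite -lerBrDl; apply: nu_le => B2 hB2; rewrite lerBrDl -lerBrDr; exact: h2.
Qed.


Definition pdisj (P : seq (set T)) :=
  forall i j, (i < size P)%N -> (j < size P)%N -> i <> j ->
     nth set0 P i `&` nth set0 P j = set0.

Definition UP (P : seq (set T)) := foldr setU set0 P.

Lemma UP_nth P t : UP P t -> exists j, (j < size P)%N /\ nth set0 P j t.
Proof.
elim: P => [//|A P IH] /= [hA|/IH [j [hj ht]]]; first by exists 0%N.
by exists j.+1.
Qed.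

Lemma nth_UP P t j : (j < size P)%N -> nth set0 P j t -> UP P t.
Proof.
elim: P j => [//|A P IH] [|j] /= hj ht; first by left.
by right; apply: (IH j).
Qed.

Lemma pdisj_cons A P : pdisj (A :: P) -> pdisj P /\ A `&` UP P = set0.
Proof.
move=> h; split.
  move=> i j hi hj hij; apply: (h i.+1 j.+1) => //=; congruence.
rewrite -subset0 => t [hA /UP_nth [j [hj ht]]].
have := h 0%N j.+1 isT hj (fun e => ltac:(discriminate)).
by move=> /= e; have : (A `&` nth set0 P j) t by []; rewrite e.
Qed.

Lemma sum_nu P C : pdisj P ->
  \sum_(A <- P) nu (A `&` C) = nu (C `&` UP P).
Proof.
elim: P => [|A P IH] hP.
  by rewrite big_nil /= setI0 nu0.
have [hP' hAU] := pdisj_cons _ _ hP.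
rewrite big_cons IH // /=.
have -> : C `&` (A `|` UP P) = (A `&` C) `|` (C `&` UP P).
  by rewrite setIUr setIC.
rewrite nu_add //.
rewrite -subset0 => t [[hA _] [_ hU]].
by have : (A `&` UP P) t by []; rewrite hAU.
Qed.

Lemma part_UP P : is_partition P -> UP P = setT.
Proof.
case=> _ hc; rewrite predeqE => t; split => // _.
by have [i [hi ht]] := hc t; exact: (nth_UP _ _ _ hi ht).
Qed.

Variable g : T -> R.
Hypothesis hg : forall p, -1 <= g p <= 1.

Lemma inf_le_pt A p : A p -> inf (g @` A) <= g p.
Proof.
move=> hp; apply: ge_inf; last by exists p.
exists (-1) => _ [q _ <-]; by case/andP: (hg q).
Qed.

Lemma inf_ge_set A a : (forall p, A p -> a <= g p) -> A !=set0 -> a <= inf (g @` A).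
Proof.
move=> h [p hp]; apply: lb_le_inf; first by exists (g p), p.
by move=> _ [q hq <-]; exact: h.
Qed.

Lemma nu_split A C : nu A = nu (A `&` C) + nu (A `&` ~` C).
Proof.
have hd : (A `&` C) `&` (A `&` ~` C) = set0.
  by rewrite -subset0 => t [[_ ?] [_ ?]].
by rewrite -(nu_add _ _ hd) -setIUr setUCr setIT.
Qed.

Lemma nu_empty A : ~ (exists p, A p) -> nu A = 0.
Proof.
move=> h; have -> : A = set0 by rewrite -subset0 => t ht; apply: h; exists t.
exact: nu0.
Qed.

Lemma term_le_half A C a : (forall p, C p -> g p <= a) ->
  inf (g @` A) * nu (A `&` C) <= a * nu (A `&` C).
Proof.
move=> h; have [[p [hA hC]]|hn] := pselect (exists p, (A `&` C) p).
  apply: ler_wpM2r; first exact: nu_ge0.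
  exact: le_trans (inf_le_pt _ _ hA) (h p hC).
by rewrite nu_empty // !mulr0.
Qed.

Lemma term_le A C a b : (forall p, C p -> g p <= a) -> (forall p, ~ C p -> g p <= b) ->
  inf (g @` A) * nu A <= a * nu (A `&` C) + b * nu (A `&` ~` C).
Proof.
move=> ha hb; rewrite (nu_split A C) mulrDr; apply: lerD; first exact: term_le_half.
by apply: term_le_half => p; exact: hb.
Qed.

Lemma lower_sum_le P C a b : is_partition P ->
  (forall p, C p -> g p <= a) -> (forall p, ~ C p -> g p <= b) ->
  lower_sum nu g P <= a * nu C + b * nu (~` C).
Proof.
move=> hP ha hb; rewrite /lower_sum.
apply: le_trans (ler_sum _ (fun A _ => term_le A _ _ _ ha hb)) _.
rewrite big_split /= -!mulr_sumr !sum_nu; try by case: hP.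
by rewrite part_UP // !setIT.
Qed.

Lemma partT : is_partition [:: @setT T].
Proof.
split; first by move=> [|i] [|j].
by move=> t; exists 0%N.
Qed.

Lemma partC (C : set T) : is_partition [:: C; ~` C].
Proof.
split.
  move=> [|[|i]] [|[|j]] //= _ _ _; first exact: setICr.
  by rewrite setIC setICr.
move=> t; have [hC|hC] := pselect (C t); first by exists 0%N.
by exists 1%N.
Qed.

Lemma int_le C a b :
  (forall p, C p -> g p <= a) -> (forall p, ~ C p -> g p <= b) ->
  int_pos nu g <= a * nu C + b * nu (~` C).
Proof.
move=> ha hb; apply: ge_sup; first by exists (lower_sum nu g [:: setT]), [:: setT]; [exact: partT|].
move=> _ [P hP <-]; exact: lower_sum_le.
Qed.

Lemma int_hub : has_ubound [set lower_sum nu g P | P in [set P | is_partition P]].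
Proof.
exists (1 * nu setT + 1 * nu (~` setT)) => _ [P hP <-].
apply: lower_sum_le => // p _; by case/andP: (hg p).
Qed.

Lemma lower_ge_half C a : (forall p, C p -> a <= g p) ->
  a * nu C <= inf (g @` C) * nu C.
Proof.
move=> h; have [hn|hn] := pselect (C !=set0).
  apply: ler_wpM2r; first exact: nu_ge0.
  exact: inf_ge_set.
by rewrite nu_empty ?mulr0 // => -[p hp]; apply: hn; exists p.
Qed.

Lemma int_ge C a b :
  (forall p, C p -> a <= g p) -> (forall p, ~ C p -> b <= g p) ->
  a * nu C + b * nu (~` C) <= int_pos nu g.
Proof.
move=> ha hb; apply: le_trans (ub_le_sup int_hub _); last first.
  by exists [:: C; ~` C] => //; exact: partC.
rewrite /lower_sum !big_cons big_nil addr0; apply: lerD; first exact: lower_ge_half.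
by apply: lower_ge_half => p; exact: hb.
Qed.

End BA.

Section Chain.
Variables (R : realType) (M : Type) (d : M -> M -> R) (hd : is_metric d) (x0 : M).

Definition X (p : Mt M) := (sval p).1.
Definition Y (p : Mt M) := (sval p).2.

Lemma d_ge0 x y : 0 <= d x y. Proof. by case: hd. Qed.
Lemma d_sym x y : d x y = d y x. Proof. by case: hd => _ [_ []]. Qed.
Lemma d_tri x y z : d x z <= d x y + d y z. Proof. by case: hd => _ [_ [_]]. Qed.
Lemma d_xx x : d x x = 0. Proof. by case: hd => _ [h _]; apply/h. Qed.
Lemma d_gt0 (p : Mt M) : 0 < d (X p) (Y p).
Proof.
rewrite lt0r d_ge0 andbT; apply/eqP => h.
case: hd => _ [hh _]; have := proj1 (hh _ _) h; exact: (proj2_sig p).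
Qed.

Variables (gamma : R) (A : set (Mt M)).

Definition W (n : nat) (p : nat -> Mt M) (z : M) : R :=
  - d x0 (Y (p 0%N)) + \sum_(i < n.+1) gamma * d (X (p i)) (Y (p i))
  - \sum_(i < n) d (X (p i)) (Y (p i.+1)) - d (X (p n)) z.

Definition Sz (z : M) := [set r : R | r = - d x0 z \/
   exists n p, (forall i, (i <= n)%N -> A (p i)) /\ r = W n p z].

Definition F (z : M) := sup (Sz z).

Hypothesis hcyc : cyc_mon d gamma A.

Lemma W_le n p z : (forall i, (i <= n)%N -> A (p i)) -> W n p z <= d z x0.
Proof.
move=> hA.
have := hcyc n (fun i : 'I_n.+1 => p i) (fun i => hA i (ltnSE (ltn_ord i))).
move=> h0.
have h1 : 0 <= \sum_(i < n.+1) (d (X (p i)) (Y (p (i.+1 %% n.+1)%N))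
                                 - gamma * d (X (p i)) (Y (p i))).
  apply: le_trans h0 _; apply: ler_sum => i _; by rewrite ge_min lexx.
rewrite sumrB big_ord_recr /= modnn in h1.
have e : \sum_(i < n) d (X (p (widen_ord (leqnSn n) i))) (Y (p ((widen_ord (leqnSn n) i).+1 %% n.+1)%N))
       = \sum_(i < n) d (X (p i)) (Y (p i.+1)).
  by apply: eq_bigr => i _ /=; rewrite modn_small // ltnS.
rewrite e in h1.
rewrite /W.
have t1 := d_tri (X (p n)) z (Y (p 0%N)).
have t2 := d_tri z x0 (Y (p 0%N)).
have s1 := d_sym x0 (Y (p 0%N)).
lra.
Qed.

Lemma Sz_ub z r : Sz z r -> r <= d z x0.
Proof.
case=> [->|[n [p [hA ->]]]]; last exact: W_le.
have := d_ge0 x0 z; have := d_ge0 z x0; lra.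
Qed.

Lemma Sz_hub z : has_ubound (Sz z).
Proof. by exists (d z x0) => r; exact: Sz_ub. Qed.

Lemma F_le z : F z <= d z x0.
Proof. apply: ge_sup; first by exists (- d x0 z); left. by move=> r; exact: Sz_ub. Qed.

Lemma F_ge z : - d x0 z <= F z.
Proof. apply: ub_le_sup; [exact: Sz_hub | by left]. Qed.

Lemma F_x0 : F x0 = 0.
Proof. apply/le_anti; have := F_le x0; have := F_ge x0; rewrite d_xx => ??. lra. Qed.

Lemma F_lip1 w z : F w <= F z + d w z.
Proof.
apply: ge_sup; first by exists (- d x0 w); left.
move=> r hr; rewrite -lerBlDr.
case: hr => [e|[n [p [hA e]]]]; subst r.
  apply: le_trans (ub_le_sup (Sz_hub z) (or_introl erefl)).
  have := d_tri x0 w z; lra.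
apply: le_trans (ub_le_sup (Sz_hub z)
   (or_intror (ex_intro _ n (ex_intro _ p (conj hA erefl))))).
rewrite /W; have := d_tri (X (p n)) w z; lra.
Qed.

Lemma F_lip w z : `|F w - F z| <= d w z.
Proof.
rewrite ler_norml; have := F_lip1 w z; have := F_lip1 z w; rewrite (d_sym z w).
move=> ??; apply/andP; split; lra.
Qed.

Lemma F_edge p0 : A p0 -> F (Y p0) + gamma * d (X p0) (Y p0) <= F (X p0).
Proof.
move=> hp0; rewrite -lerBrDr.
apply: ge_sup; first by exists (- d x0 (Y p0)); left.
move=> r hr; rewrite lerBrDr.
case: hr => [e|[n [p [hA e]]]]; subst r.
  have hW : W 0 (fun _ => p0) (X p0) = - d x0 (Y p0) + gamma * d (X p0) (Y p0).
    by rewrite /W big_ord1 big_ord0 d_xx; lra.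
  rewrite -hW; apply: ub_le_sup; first exact: Sz_hub.
  by right; exists 0%N, (fun _ => p0).
pose p' := fun i => if i == n.+1 then p0 else p i.
have hA' : forall i, (i <= n.+1)%N -> A (p' i).
  move=> i hi; rewrite /p'; case: eqP => // /eqP hne; apply: hA.
  by rewrite -ltnS ltn_neqAle hne hi.
have e1 : \sum_(i < n.+2) gamma * d (X (p' i)) (Y (p' i))
    = \sum_(i < n.+1) gamma * d (X (p i)) (Y (p i)) + gamma * d (X p0) (Y p0).
  rewrite big_ord_recr /= /p' eqxx; congr (_ + _); apply: eq_bigr => i _ /=.
  by rewrite ltn_eqF.
have e2 : \sum_(i < n.+1) d (X (p' i)) (Y (p' i.+1))
    = \sum_(i < n) d (X (p i)) (Y (p i.+1)) + d (X (p n)) (Y p0).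
  rewrite big_ord_recr /= /p' eqxx ltn_eqF //; congr (_ + _); apply: eq_bigr => i _ /=.
  have hi := ltn_ord i.
  rewrite ltn_eqF; last by apply: ltnW; apply: (leq_trans hi).
  by rewrite eqSS ltn_eqF.
have hW : W n.+1 p' (X p0) = W n p (Y p0) + gamma * d (X p0) (Y p0).
  rewrite /W e1 e2 /p' /= eqxx d_xx; lra.
rewrite -hW; apply: ub_le_sup; first exact: Sz_hub.
by right; exists n.+1, p'.
Qed.

End Chain.
Arguments X {M}.
Arguments Y {M}.
Arguments F {R M}.
Arguments d_ge0 {R M d}.
Arguments d_sym {R M d}.
Arguments d_tri {R M d}.
Arguments d_xx {R M d}.
Arguments d_gt0 {R M d}.
Arguments F_x0 {R M d}.
Arguments F_lip {R M d}.
Arguments F_edge {R M d}.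

Section Main.
Variables (R : realType) (M : Type) (d : M -> M -> R) (hd : is_metric d) (x0 : M).

Lemma rflipK (p : Mt M) : rflip (rflip p) = p.
Proof.
case: p => [[a b] h]; rewrite /rflip /=; congr exist; exact: Prop_irrelevance.
Qed.

Lemma Phi_flip f p : Phi d f (rflip p) = - Phi d f p.
Proof. by rewrite /Phi /= (d_sym hd) -mulNr opprB. Qed.

Lemma PhiN f p : Phi d (fun x => - f x) p = - Phi d f p.
Proof. by rewrite /Phi -mulNr opprB opprK addrC. Qed.

Lemma lip_le f a b : in_BLip0 d x0 f -> f a - f b <= d a b.
Proof. by case=> _ h; have := h a b; rewrite ler_norml => /andP[]. Qed.

Lemma Phi_ge f p c : c <= Phi d f p <-> c * d (X p) (Y p) <= f (X p) - f (Y p).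
Proof. by rewrite /Phi -(ler_pdivlMr _ _ (d_gt0 hd p)). Qed.

Lemma Phi_le f p c : Phi d f p <= c <-> f (X p) - f (Y p) <= c * d (X p) (Y p).
Proof. by rewrite /Phi -(ler_pdivrMr _ _ (d_gt0 hd p)). Qed.

Lemma Phi_bnd f : in_BLip0 d x0 f -> forall p, -1 <= Phi d f p <= 1.
Proof.
move=> hf p; apply/andP; split.
  apply/Phi_ge; have := lip_le _ (X p) (Y p) hf; have := lip_le _ (Y p) (X p) hf.
  rewrite (d_sym hd (Y p)); lra.
apply/Phi_le; have := lip_le _ (X p) (Y p) hf; lra.
Qed.

Lemma ball0 : in_BLip0 d x0 (fun _ => 0).
Proof. split => // x y; rewrite subr0 normr0; exact: d_ge0. Qed.

Lemma ballN f : in_BLip0 d x0 f -> in_BLip0 d x0 (fun x => - f x).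
Proof. case=> h0 h; split; first by rewrite h0 oppr0. by move=> x y; rewrite -opprD normrN. Qed.

Lemma ii_iii gamma (A : set (Mt M)) f : in_BLip0 d x0 f ->
  (forall p, A p -> gamma <= Phi d f p) -> cyc_mon d gamma A.
Proof.
move=> hf hA n q hq.
have key : forall i : 'I_n.+1,
  f (sval (q i)).2 - f (sval (q (ordS i))).2 <=
   Num.min (d (sval (q i)).1 (sval (q (ordS i))).2 - gamma * d (sval (q i)).1 (sval (q i)).2)
           (d (sval (q i)).2 (sval (q (ordS i))).2).
  move=> i; rewrite le_min; apply/andP; split.
    have := proj1 (Phi_ge _ _ _) (hA _ (hq i)); rewrite /X /Y.
    have := lip_le _ (sval (q i)).1 (sval (q (ordS i))).2 hf; lra.
  exact: lip_le.
apply: le_trans (ler_sum _ (fun i _ => key i)).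
rewrite sumrB.
have -> : \sum_(i < n.+1) f (sval (q (ordS i))).2 = \sum_(i < n.+1) f (sval (q i)).2.
  by rewrite [RHS](reindex_inj (@ordS_inj n.+1)).
by rewrite subrr.
Qed.

Lemma iii_ii gamma (A : set (Mt M)) : cyc_mon d gamma A ->
  exists f, in_BLip0 d x0 f /\ (forall p, A p -> gamma <= Phi d f p).
Proof.
move=> hc; exists (F d x0 gamma A); split.
  split; first exact: F_x0.
  move=> x y; exact: F_lip.
move=> p hp; apply/Phi_ge; have := F_edge hd x0 _ _ hc _ hp; rewrite /X /Y; lra.
Qed.

End Main.

Section Final.
Variables (R : realType) (M : Type) (d : M -> M -> R) (hd : is_metric d) (x0 : M)
  (mu : set (Mt M) -> R) (hmu : is_ba mu).

Lemma hmuN : is_ba (fun B => - mu B).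
Proof.
case: hmu => [[C hC] ha]; split; first by exists C => A; rewrite normrN.
by move=> A B h; rewrite ha // opprD.
Qed.

Lemma Ip_le f (hf : in_BLip0 d x0 f) C a b :
  (forall p, C p -> Phi d f p <= a) -> (forall p, ~ C p -> Phi d f p <= b) ->
  int_pos (mu_pos mu) (Phi d f) <= a * mu_pos mu C + b * mu_pos mu (~` C).
Proof. exact: (int_le _ _ _ hmu _ (@Phi_bnd _ _ _ hd x0 f hf)). Qed.

Lemma In_le f (hf : in_BLip0 d x0 f) C a b :
  (forall p, C p -> Phi d f p <= a) -> (forall p, ~ C p -> Phi d f p <= b) ->
  int_pos (mu_neg mu) (Phi d f) <= a * mu_neg mu C + b * mu_neg mu (~` C).
Proof. exact: (int_le _ _ _ hmuN _ (@Phi_bnd _ _ _ hd x0 f hf)). Qed.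

Lemma Ip_ge f (hf : in_BLip0 d x0 f) C a b :
  (forall p, C p -> a <= Phi d f p) -> (forall p, ~ C p -> b <= Phi d f p) ->
  a * mu_pos mu C + b * mu_pos mu (~` C) <= int_pos (mu_pos mu) (Phi d f).
Proof. exact: (int_ge _ _ _ hmu _ (@Phi_bnd _ _ _ hd x0 f hf)). Qed.

Lemma In_ge f (hf : in_BLip0 d x0 f) C a b :
  (forall p, C p -> a <= Phi d f p) -> (forall p, ~ C p -> b <= Phi d f p) ->
  a * mu_neg mu C + b * mu_neg mu (~` C) <= int_pos (mu_neg mu) (Phi d f).
Proof. exact: (int_ge _ _ _ hmuN _ (@Phi_bnd _ _ _ hd x0 f hf)). Qed.

Lemma pos_split C : mu_pos mu setT = mu_pos mu C + mu_pos mu (~` C).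
Proof. by rewrite -(nu_add _ _ _ hmu _ _ (setICr C)) setUCr. Qed.

Lemma neg_split C : mu_neg mu setT = mu_neg mu C + mu_neg mu (~` C).
Proof. by rewrite -(nu_add _ _ _ hmuN _ _ (setICr C)) setUCr. Qed.

Lemma pos_ge0 C : 0 <= mu_pos mu C. Proof. exact: nu_ge0 _ _ _ hmu C. Qed.
Lemma neg_ge0 C : 0 <= mu_neg mu C. Proof. exact: nu_ge0 _ _ _ hmuN C. Qed.
Lemma pos0 : mu_pos mu set0 = 0. Proof. exact: nu0 _ _ _ hmu. Qed.
Lemma neg0 : mu_neg mu set0 = 0. Proof. exact: nu0 _ _ _ hmuN. Qed.

Lemma hilo f : in_BLip0 d x0 f ->
  (forall p, -1 <= Phi d f p) /\ (forall p, Phi d f p <= 1).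
Proof.
move=> hf; have hb := @Phi_bnd _ _ _ hd x0 f hf.
by split => p; case/andP: (hb p).
Qed.

Lemma I_abs f : in_BLip0 d x0 f -> `|ba_int mu (Phi d f)| <= tvar mu setT.
Proof.
move=> hf; have [hlo hhi] := hilo _ hf.
have h1 := Ip_le _ hf setT 1 1 (fun p _ => hhi p) (fun p _ => hhi p).
have h2 := In_le _ hf setT 1 1 (fun p _ => hhi p) (fun p _ => hhi p).
have h3 := Ip_ge _ hf setT (-1) (-1) (fun p _ => hlo p) (fun p _ => hlo p).
have h4 := In_ge _ hf setT (-1) (-1) (fun p _ => hlo p) (fun p _ => hlo p).
rewrite setCT pos0 neg0 in h1 h2 h3 h4.
rewrite /ba_int /tvar ler_norml; apply/andP; split; lra.
Qed.

Lemma PS_hub : has_ubound [set `|ba_int mu (Phi d f)| | f in [set f | in_BLip0 d x0 f]].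
Proof. by exists (tvar mu setT) => _ [f hf <-]; exact: I_abs. Qed.

Lemma Phistar_le : Phistar_norm d x0 mu <= tvar mu setT.
Proof.
apply: ge_sup; first by exists `|ba_int mu (Phi d (fun _ => 0))|, (fun _ => 0) => //; exact: ball0.
by move=> _ [f hf <-]; exact: I_abs.
Qed.

Lemma Phistar_ub f : in_BLip0 d x0 f -> `|ba_int mu (Phi d f)| <= Phistar_norm d x0 mu.
Proof. by move=> hf; apply: ub_le_sup; [exact: PS_hub | exists f]. Qed.


Definition condii := forall gamma : R, 0 < gamma < 1 ->
      exists (A : set (Mt M)) (f : M -> R), in_BLip0 d x0 f /\
        mu_pos mu A + mu_neg mu (@rflip M @` A) >= gamma * tvar mu setT /\
        (forall p, A p -> Phi d f p >= gamma).

Lemma ii_i : condii -> Phistar_norm d x0 mu = tvar mu setT.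
Proof.
move=> h; apply/le_anti; rewrite Phistar_le /=.
set P := Phistar_norm d x0 mu.
have P0 : 0 <= P by apply: le_trans (normr_ge0 _) (Phistar_ub _ (@ball0 _ _ _ hd x0)).
have key : forall gamma : R, 0 < gamma < 1 -> ((1 + gamma) * gamma - 1) * tvar mu setT <= P.
  move=> g hg; have [A [f [hf [hS hA]]]] := h g hg.
  have [hlo hhi] := hilo _ hf.
  have h1 := Ip_ge _ hf A g (-1) hA (fun p _ => hlo p).
  have hr : forall p, (@rflip M @` A) p -> Phi d f p <= - g.
    move=> p [q hq <-]; rewrite (@Phi_flip _ _ _ hd); have := hA q hq; lra.
  have h2 := In_le _ hf (@rflip M @` A) (- g) 1 hr (fun p _ => hhi p).
  have s1 := pos_split A; have s2 := neg_split (@rflip M @` A).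
  have h3 := Phistar_ub _ hf; rewrite -/P /ba_int ler_norml in h3.
  case/andP: h3 => _ h3.
  move: hS; rewrite /tvar => hS.
  case/andP: hg => g0 g1.
  have a1 := pos_ge0 A; have b1 := neg_ge0 (@rflip M @` A).
  nra.
rewrite leNgt; apply/negP => hlt.
set N := tvar mu setT in key hlt.
have N0 : 0 < N by apply: le_lt_trans hlt.
pose e := (N - P) / (4 * N).
have he : e * (4 * N) = N - P by rewrite /e divfK // mulf_neq0 // gt_eqF.
have e0 : 0 < e by rewrite /e divr_gt0 // ?subr_gt0 // mulr_gt0.
have e1 : e <= 1/4 by nra.
have hg1 : 0 < 1 - e < 1 by apply/andP; split; lra.
have := key (1 - e) hg1.
have := mulr_ge0 (mulr_ge0 (ltW e0) (ltW e0)) (ltW N0).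
nra.
Qed.

Lemma i_ii : Phistar_norm d x0 mu = tvar mu setT -> condii.
Proof.
move=> hP g hg.
set N := tvar mu setT in hP *.
have N0 : 0 <= N by rewrite /N /tvar addr_ge0 // ?pos_ge0 ?neg_ge0.
case/andP: hg => g0 g1.
have [hN|hN] := eqVneq N 0.
  exists set0, (fun _ => 0); split; first exact: ball0.
  split; last by [].
  by rewrite hN mulr0 addr_ge0 // ?pos_ge0 ?neg_ge0.
have Np : 0 < N by rewrite lt0r hN N0.
pose eps := (1 - g) * (1 - g) * N.
have eps0 : 0 < eps by rewrite /eps !mulr_gt0 // subr_gt0.
have hs : has_sup [set `|ba_int mu (Phi d f)| | f in [set f | in_BLip0 d x0 f]].
  split; last exact: PS_hub.
  by exists `|ba_int mu (Phi d (fun _ => 0))|, (fun _ => 0) => //; exact: ball0.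
have [_ [f hf <-]] := sup_adherent eps0 hs.
rewrite -/(Phistar_norm d x0 mu) hP => hlt.
have [hlo hhi] := hilo _ hf.
have s0 := pos_ge0; have t0 := neg_ge0.
have [hI|hI] := lerP 0 (ba_int mu (Phi d f)).
- rewrite ger0_norm // /ba_int in hlt.
  pose A := [set p | g <= Phi d f p].
  exists A, f; split => //; split; last by [].
  have hnA : forall p, ~ A p -> Phi d f p <= g.
    by move=> p /negP; rewrite -ltNge => /ltW.
  have h1 := Ip_le _ hf A 1 g (fun p _ => hhi p) hnA.
  have hnr : forall p, ~ (@rflip M @` A) p -> - g <= Phi d f p.
    move=> p hp; have [//|hlt'] := lerP (- g) (Phi d f p).
    exfalso; apply: hp; exists (rflip p); last exact: rflipK.
    rewrite /A /= (@Phi_flip _ _ _ hd); lra.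
  have h2 := In_ge _ hf (@rflip M @` A) (-1) (- g) (fun p _ => hlo p) hnr.
  have s1 := pos_split A; have s2 := neg_split (@rflip M @` A).
  have a1 := pos_ge0 A; have b1 := neg_ge0 (@rflip M @` A).
  move: hlt; rewrite /eps /N /tvar => hlt.
  rewrite /N /tvar in Np |- *.
  nra.
- rewrite ltr0_norm // /ba_int in hlt.
  pose A := [set p | Phi d f p <= - g].
  exists A, (fun x => - f x); split; first exact: ballN.
  split; last by move=> p hp; rewrite PhiN; rewrite /A /= in hp; lra.
  have hnA : forall p, ~ A p -> - g <= Phi d f p.
    by move=> p /negP; rewrite -ltNge => /ltW.
  have h1 := Ip_ge _ hf A (-1) (- g) (fun p _ => hlo p) hnA.
  have hnr : forall p, ~ (@rflip M @` A) p -> Phi d f p <= g.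
    move=> p hp; have [//|hlt'] := lerP (Phi d f p) g.
    exfalso; apply: hp; exists (rflip p); last exact: rflipK.
    rewrite /A /= (@Phi_flip _ _ _ hd); lra.
  have h2 := In_le _ hf (@rflip M @` A) 1 g (fun p _ => hhi p) hnr.
  have s1 := pos_split A; have s2 := neg_split (@rflip M @` A).
  have a1 := pos_ge0 A; have b1 := neg_ge0 (@rflip M @` A).
  move: hlt; rewrite /eps /N /tvar => hlt.
  rewrite /N /tvar in Np |- *.
  nra.
Qed.

Lemma all_equiv :
  (Phistar_norm d x0 mu = ba_norm mu <->
   (forall gamma : R, 0 < gamma < 1 ->
      exists (A : set (Mt M)) (f : M -> R), in_BLip0 d x0 f /\
        mu_pos mu A + mu_neg mu (@rflip M @` A) >= gamma * tvar mu setT /\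
        (forall p, A p -> Phi d f p >= gamma))) /\
  ((forall gamma : R, 0 < gamma < 1 ->
      exists (A : set (Mt M)) (f : M -> R), in_BLip0 d x0 f /\
        mu_pos mu A + mu_neg mu (@rflip M @` A) >= gamma * tvar mu setT /\
        (forall p, A p -> Phi d f p >= gamma)) <->
   (forall gamma : R, 0 < gamma < 1 ->
      exists A : set (Mt M), cyc_mon d gamma A /\
        mu_pos mu A + mu_neg mu (@rflip M @` A) >= gamma * tvar mu setT)).
Proof.
split; split.
- exact: i_ii.
- exact: ii_i.
- move=> h g hg; have [A [f [hf [hS hA]]]] := h g hg.
  exists A; split => //; exact: (@ii_iii _ _ _ hd x0 g A f hf hA).
- move=> h g hg; have [A [hc hS]] := h g hg.
  have [f [hf hA]] := @iii_ii _ _ _ hd x0 g A hc.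
  by exists A, f.
Qed.

End Final.

Theorem theorem2p3 (R : realType) (M : Type) (d : M -> M -> R) (x0 : M)
  (hd : is_metric d) (mu : set (Mt M) -> R) (hmu : is_ba mu) :
  (Phistar_norm d x0 mu = ba_norm mu <->
   (forall gamma : R, 0 < gamma < 1 ->
      exists (A : set (Mt M)) (f : M -> R), in_BLip0 d x0 f /\
        mu_pos mu A + mu_neg mu (@rflip M @` A) >= gamma * tvar mu setT /\
        (forall p, A p -> Phi d f p >= gamma))) /\
  ((forall gamma : R, 0 < gamma < 1 ->
      exists (A : set (Mt M)) (f : M -> R), in_BLip0 d x0 f /\
        mu_pos mu A + mu_neg mu (@rflip M @` A) >= gamma * tvar mu setT /\
        (forall p, A p -> Phi d f p >= gamma)) <->
   (forall gamma : R, 0 < gamma < 1 ->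
      exists A : set (Mt M), cyc_mon d gamma A /\
        mu_pos mu A + mu_neg mu (@rflip M @` A) >= gamma * tvar mu setT)).
Proof. exact: (@all_equiv R M d hd x0 mu hmu). Qed.
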